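(* Let $r\ge 3$ and $Y,Z\subseteq\{1,\dots,r-1\}$. (1) The Dynkin diagram of $C_{\Phi_{r,Z}}$ is of type $D'_r$ if $r-1\in Z$ and of type $D_r$ if $r-1\notin Z$. (2) The Dynkin diagram of $C_{\Psi_{r,Y}}$ is of type $C_r$ if $r-1\in Y$ and of type $A_r$ if $r-1\notin Y$.
   Context: In $\mathbb{Z}^r$ with standard basis $\alpha_1,\dots,\alpha_r$ let $\eta_{i,j}=\sum_{k=i}^j\alpha_k$ for $i\le j$ and $\eta_{i,j}=0$ for $i>j$. For $Z\subseteq\{1,\dots,r-1\}$, $\Phi_{r,Z}$ consists of $\eta_{i,j-1}$ ($1\le i<j\le r$), $\eta_{i,r-2}+\alpha_r$ ($1\le i<r$), $\eta_{i,r}+\eta_{j,r-2}$ ($1\le i<j<r$), $\eta_{j,r}+\eta_{j,r-2}$ ($j\in Z$). For $Y\subseteq\{1,\dots,r-1\}$, $\Psi_{r,Y}$ consists of $\eta_{i,j}$ ($1\le i\le j\le r$), $\eta_{i,r}+\eta_{j,r-1}$ ($1\le i<j<r$), $\eta_{j,r}+\eta_{j,r-1}$ ($j\in Y$). For finite $\Lambda\subseteq\mathbb{Z}^r$, $C_\Lambda=(c_{ij})$ has $c_{ii}=2$ and $c_{ij}=-\max\{k\ge0: k\alpha_i+\alpha_j\in\Lambda\}$ for $i\ne j$. Its Dynkin diagram has vertices $1,\dots,r$ with an arrow to $i$ labelled $-c_{ij}$ iff $c_{ij}\ne0$. Type $X_r$ ($X=A,C,D$) means equal to the corresponding finite-type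 Cartan matrix up to relabelling; type $D'_r$: $c_{ij}=c_{ji}=-1$ exactly for the pairs $\{k,k+1\}$ ($1\le k\le r-3$), $\{r-2,r-1\}$, $\{r-2,r\}$, $\{r-1,r\}$, and $c_{ij}=0$ otherwise. *)

(* Defs.v *)
From HB Require Import structures.
From mathcomp Require Import all_boot all_order all_algebra all_fingroup.
Set Implicit Arguments. Unset Strict Implicit. Unset Printing Implicit Defensive.
Import Order.TTheory GRing.Theory Num.Theory.
Local Open Scope ring_scope.

(* Z^r is modelled by row vectors 'rV[int]_r.  The standard basis vector
   alpha_a (1-based a in 1..r) has a 1 in (0-based) column a-1. *)

(* eta_{i,j} = sum_{k=i}^j alpha_k (1-based), which is 0 when i > j. *)
Definition eta (r i j : nat) : 'rV[int]_r :=
  \row_(p < r) (if (i <= p.+1 <= j)%N then 1 else 0).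

Definition alpha (r a : nat) : 'rV[int]_r := eta r a a.

Definition Phi (r : nat) (Z : seq nat) : seq 'rV[int]_r :=
  [seq eta r i j.-1 | i <- iota 1 r, j <- iota i.+1 (r - i)]        (* 1 <= i < j <= r *)
  ++ [seq eta r i (r - 2) + alpha r r | i <- iota 1 (r - 1)]
  ++ [seq eta r i r + eta r j (r - 2)
       | i <- iota 1 (r - 1), j <- iota i.+1 (r - 1 - i)]             (* 1 <= i < j < r *)
  ++ [seq eta r j r + eta r j (r - 2) | j <- Z].

Definition Psi (r : nat) (Y : seq nat) : seq 'rV[int]_r :=
  [seq eta r i j | i <- iota 1 r, j <- iota i (r - i).+1]            (* 1 <= i <= j <= r *)
  ++ [seq eta r i r + eta r j (r - 1)
       | i <- iota 1 (r - 1), j <- iota i.+1 (r - 1 - i)]             (* 1 <= i < j < r *)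
  ++ [seq eta r j r + eta r j (r - 1) | j <- Y].

(* An upper bound for the k's with k alpha_i + alpha_j in L (i <> j):
   the i-th coordinate of such a vector is k. *)
Definition kbound (r : nat) (L : seq 'rV[int]_r) : nat :=
  (\sum_(v <- L) \sum_(p < r) `|v ord0 p|%N).+1.

(* The matrix C_Lambda; row/column p : 'I_r corresponds to alpha_{p+1}.
   c_ij = - max{k >= 0 : k alpha_i + alpha_j in L} for i <> j
   (the max of an empty set is taken to be 0; this never occurs below
   since every alpha_j lies in Phi_{r,Z} and Psi_{r,Y}). *)
Definition string_in (r : nat) (L : seq 'rV[int]_r) (k a b : nat) : bool :=
  (k%:Z *: alpha r a + alpha r b) \in L.

Definition cartan (r : nat) (L : seq 'rV[int]_r) : 'M[int]_r :=
  \matrix_(p, q)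
    if p == q then 2
    else - (\max_(k < kbound L | string_in L k p.+1 q.+1) (k : nat))%:Z.

Definition simply_laced (r : nat) (adj : nat -> nat -> bool) : 'M[int]_r :=
  \matrix_(p, q)
    if p == q then 2
    else if adj p.+1 q.+1 || adj q.+1 p.+1 then -1 else 0.

Definition cartan_A (r : nat) : 'M[int]_r :=
  simply_laced r (fun a b => b == a.+1).

(* Type C_r, with the convention c_ij = 2(a_i,a_j)/(a_i,a_i) used by the
   definition of C_Lambda (alpha_r long):  c_{r-1,r} = -2, c_{r,r-1} = -1. *)
Definition cartan_C (r : nat) : 'M[int]_r :=
  \matrix_(p, q)
    if ((p.+1 == r.-1) && (q.+1 == r))%N then -2 else cartan_A r p q.

Definition cartan_D (r : nat) : 'M[int]_r :=
  simply_laced r (fun a b => ((b == a.+1) && (1 <= a <= r - 2)%N)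
                             || ((a == r - 2) && (b == r))%N).

Definition cartan_D' (r : nat) : 'M[int]_r :=
  simply_laced r (fun a b => ((b == a.+1) && (1 <= a <= r - 3)%N)
                             || ((a == r - 2) && (b == r - 1))%N
                             || ((a == r - 2) && (b == r))%N
                             || ((a == r - 1) && (b == r))%N).

Definition of_type (r : nat) (C X : 'M[int]_r) : Prop :=
  exists s : 'S_r, forall p q : 'I_r, C p q = X (s p) (s q).

(* Main.v *)
From Pilot Require Import Defs.
From HB Require Import structures.
From mathcomp Require Import all_boot all_order all_algebra all_fingroup.
From mathcomp Require Import zify.
Import Order.TTheory GRing.Theory Num.Theory.
Local Open Scope ring_scope.
Local Notation eta := Pilot.Defs.eta.

Lemma ent_eta r i j (p : 'I_r) : (eta r i j) 0 p = ((i <= p.+1 <= j)%N : nat)%:Z.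
Proof. by rewrite mxE; case: ifP. Qed.

Lemma ent_w r (k a b : nat) (p : 'I_r) :
  (k%:Z *: alpha r a + alpha r b) 0 p =
  ((k * (a <= p.+1 <= a)%N + (b <= p.+1 <= b)%N)%N : nat)%:Z.
Proof. rewrite /alpha !mxE; case: ifP; case: ifP => * /=; lia. Qed.

Lemma ent_add r (u v : 'rV[int]_r) f g :
  (forall p : 'I_r, u 0 p = (f p.+1)%:Z) -> (forall p : 'I_r, v 0 p = (g p.+1)%:Z) ->
  forall p : 'I_r, (u + v) 0 p = ((f p.+1 + g p.+1)%N : nat)%:Z.
Proof. by move=> hu hv p; rewrite mxE hu hv PoszD. Qed.

Lemma myeqE r (u v : 'rV[int]_r) (f g : nat -> nat) :
  (forall p : 'I_r, u 0 p = (f p.+1)%:Z) -> (forall p : 'I_r, v 0 p = (g p.+1)%:Z) ->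
  u = v -> forall t, (0 < t <= r)%N -> f t = g t.
Proof.
move=> hu hv e t /andP[t0 tr].
have ht : (t.-1 < r)%N by rewrite prednK.
have := hu (Ordinal ht); rewrite e hv /= prednK // => /eqP.
by rewrite eqz_nat => /eqP.
Qed.

Lemma Eeq r (u v : 'rV[int]_r) (f g : nat -> nat) :
  (forall p : 'I_r, u 0 p = (f p.+1)%:Z) -> (forall p : 'I_r, v 0 p = (g p.+1)%:Z) ->
  (forall t, (0 < t <= r)%N -> f t = g t) -> u = v.
Proof.
move=> hu hv e; apply/rowP => p; rewrite hu hv e //.
by rewrite ltn_ord.
Qed.

Lemma max_eq N (P : pred nat) (m : nat) : (m < N)%N -> (0 < m -> P m)%N ->
  (forall k, P k -> k <= m)%N -> \max_(k < N | P k) (k : nat) = m.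
Proof.
move=> mN Pm hk; apply/eqP; rewrite eqn_leq; apply/andP; split.
  by apply/bigmax_leqP => i /hk.
case: m mN Pm {hk} => // m mN Pm.
by apply: (leq_bigmax_cond (Ordinal mN)); apply: Pm.
Qed.

Lemma kbound_gt r (L : seq 'rV[int]_r) : (3 <= r)%N -> eta r 1 2 \in L -> (2 < kbound L)%N.
Proof.
case: r L => [|[|r]] // L r3 hL.
rewrite /kbound ltnS (big_rem _ hL) /=.
apply: leq_trans (leq_addr _ _).
rewrite 2!big_ord_recl !ent_eta /=.
by rewrite addnA leq_addr.
Qed.


Definition fE i j t : nat := (i <= t <= j)%N.
Definition fW k a b t : nat := (k * (a <= t <= a) + (b <= t <= b))%N.
Definition fS (f g : nat -> nat) t : nat := (f t + g t)%N.

Lemma ent_E r i j (p : 'I_r) : (eta r i j) 0 p = (fE i j p.+1)%:Z.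
Proof. exact: ent_eta. Qed.
Lemma ent_W r k a b (p : 'I_r) : (k%:Z *: alpha r a + alpha r b) 0 p = (fW k a b p.+1)%:Z.
Proof. exact: ent_w. Qed.
Lemma ent_S r i j i' j' (p : 'I_r) : (eta r i j + eta r i' j') 0 p = (fS (fE i j) (fE i' j') p.+1)%:Z.
Proof. by rewrite mxE !ent_E PoszD. Qed.

Lemma memPhi r Z v : v \in Phi r Z ->
  [\/ exists i j, [/\ (1 <= i)%N, (i <= j)%N, (j <= r-1)%N & v = eta r i j],
      exists i, (1 <= i <= r-1)%N /\ v = eta r i (r-2) + eta r r r,
      exists i j, [/\ (1 <= i)%N, (i < j)%N, (j < r)%N & v = eta r i r + eta r j (r-2)]
    | exists j, j \in Z /\ v = eta r j r + eta r j (r-2)].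
Proof.
rewrite !mem_cat => /or4P [/allpairsPdep[i [j [hi hj ->]]] | /mapP[i hi ->]
   | /allpairsPdep[i [j [hi hj ->]]] | /mapP[j hj ->]].
- rewrite !mem_iota in hi hj; apply: Or41; exists i, j.-1; split => //; lia.
- rewrite !mem_iota in hi; apply: Or42; exists i; split => //; lia.
- rewrite !mem_iota in hi hj; apply: Or43; exists i, j; split => //; lia.
- by apply: Or44; exists j.
Qed.

Lemma memPsi r Y v : v \in Psi r Y ->
  [\/ exists i j, [/\ (1 <= i)%N, (i <= j)%N, (j <= r)%N & v = eta r i j],
      exists i j, [/\ (1 <= i)%N, (i < j)%N, (j < r)%N & v = eta r i r + eta r j (r-1)]
    | exists j, j \in Y /\ v = eta r j r + eta r j (r-1)].
Proof.
rewrite !mem_cat => /or3P [/allpairsPdep[i [j [hi hj ->]]]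
   | /allpairsPdep[i [j [hi hj ->]]] | /mapP[j hj ->]].
- rewrite !mem_iota in hi hj; apply: Or31; exists i, j; split => //; lia.
- rewrite !mem_iota in hi hj; apply: Or32; exists i, j; split => //; lia.
- by apply: Or33; exists j.
Qed.

Definition adjPhi r (Z : seq nat) a b : bool :=
  [|| ((b == a.+1) && (b <= r-1)), ((a == b.+1) && (a <= r-1)),
      ((a == r-2) && (b == r)), ((a == r) && (b == r-2))
    | ((r-1) \in Z) && (((a==r-1)&&(b==r)) || ((a==r)&&(b==r-1)))]%N.

Section Fam.
Local Open Scope nat_scope.
Lemma famA r k a b i j : a <> b -> 0 < k -> 0 < a <= r -> 0 < b <= r -> 0 < i -> i <= j -> j <= r ->
  (forall t, 0 < t <= r -> k * (a <= t <= a) + (b <= t <= b) = (i <= t <= j)) ->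
  k = 1 /\ j = i.+1 /\ ((a = i /\ b = i.+1) \/ (b = i /\ a = i.+1)).
Proof.
move=> ab k0 ha hb i0 ij jr H.
have h1 : k = 1 /\ i <= a <= j by have := H a; lia.
have h2 : i <= b <= j by have := H b; lia.
have h3 : i = a \/ i = b by have := H i; lia.
have h4 : i.+1 <= j -> i.+1 = a \/ i.+1 = b by have := H i.+1; lia.
have h5 : j = a \/ j = b by have := H j; lia.
lia.
Qed.


Lemma famB (r k a b : nat) (r3 : 3 <= r) (ab : a <> b) (k0 : 0 < k) (ha : 0 < a <= r) (hb : 0 < b <= r) i : 0 < i <= r - 1 ->
  (forall t, 0 < t <= r -> k * (a <= t <= a) + (b <= t <= b) = (i <= t <= r - 2) + (r <= t <= r)) ->
  k = 1 /\ i = r - 2 /\ ((a = r - 2 /\ b = r) \/ (b = r - 2 /\ a = r)).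
Proof.
move=> hi H.
have h1 : k = 1 /\ ((i <= a <= r-2) \/ a = r) by have := H a; lia.
have h2 : (i <= b <= r-2) \/ b = r by have := H b; lia.
have h3 : r = a \/ r = b by have := H r; lia.
have h4 : i <= r - 2 -> i = a \/ i = b by have := H i; lia.
have h5 : i <= r - 2 -> r - 2 = a \/ r - 2 = b by have := H (r-2); lia.
lia.
Qed.

Lemma famC (r k a b : nat) (r3 : 3 <= r) (ab : a <> b) (k0 : 0 < k) (ha : 0 < a <= r) (hb : 0 < b <= r) i j : 0 < i < j -> j < r ->
  (forall t, 0 < t <= r -> k * (a <= t <= a) + (b <= t <= b) = (i <= t <= r) + (j <= t <= r - 2)) -> False.
Proof.
move=> hi hj H.
have h3 : r = a \/ r = b by have := H r; lia.
have h4 : i = a \/ i = b by have := H i; lia.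
have h5 : r - 1 = a \/ r - 1 = b by have := H (r-1); lia.
lia.
Qed.

Lemma famD (r k a b : nat) (r3 : 3 <= r) (ab : a <> b) (k0 : 0 < k) (ha : 0 < a <= r) (hb : 0 < b <= r) j : 0 < j <= r - 1 ->
  (forall t, 0 < t <= r -> k * (a <= t <= a) + (b <= t <= b) = (j <= t <= r) + (j <= t <= r - 2)) ->
  k = 1 /\ j = r - 1 /\ ((a = r - 1 /\ b = r) \/ (b = r - 1 /\ a = r)).
Proof.
move=> hj H.
have h3 : r = a \/ r = b by have := H r; lia.
have h4 : j = a \/ j = b by have := H j; lia.
have h5 : r - 1 = a \/ r - 1 = b by have := H (r-1); lia.
have h1 : j = r - 1 -> k = 1 by have := H a; lia.
lia.
Qed.

Lemma famB' (r k a b : nat) (r3 : 3 <= r) (ab : a <> b) (k0 : 0 < k) (ha : 0 < a <= r) (hb : 0 < b <= r) i j : 0 < i < j -> j < r ->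
  (forall t, 0 < t <= r -> k * (a <= t <= a) + (b <= t <= b) = (i <= t <= r) + (j <= t <= r - 1)) -> False.
Proof.
move=> hi hj H.
have h3 : r = a \/ r = b by have := H r; lia.
have h4 : i = a \/ i = b by have := H i; lia.
have h5 : r - 1 = a \/ r - 1 = b by have := H (r-1); lia.
lia.
Qed.

Lemma famC' (r k a b : nat) (r3 : 3 <= r) (ab : a <> b) (k0 : 0 < k) (ha : 0 < a <= r) (hb : 0 < b <= r) j : 0 < j <= r - 1 ->
  (forall t, 0 < t <= r -> k * (a <= t <= a) + (b <= t <= b) = (j <= t <= r) + (j <= t <= r - 1)) ->
  k = 2 /\ j = r - 1 /\ a = r - 1 /\ b = r.
Proof.
move=> hj H.
have h3 : r = a \/ r = b by have := H r; lia.
have h4 : j = a \/ j = b by have := H j; lia.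
have h5 : r - 1 = a \/ r - 1 = b by have := H (r-1); lia.
have h1 : j = r - 1 -> a = r - 1 /\ k = 2 by have := H a; have := H b; lia.
lia.
Qed.
End Fam.



Definition mPsi r (Y : seq nat) a b : nat :=
  (if [&& a == r-1, b == r & (r-1) \in Y] then 2 else ((b == a.+1) || (a == b.+1)))%N.

Lemma PhiS1 r Z k a b : (3 <= r)%N -> (forall j, j \in Z -> (1 <= j <= r - 1)%N) -> a != b -> (1 <= a <= r)%N -> (1 <= b <= r)%N ->
  string_in (Phi r Z) k a b -> (k <= adjPhi r Z a b)%N.
Proof.
move=> r3 hZ /eqP ab ha hb; case: k => [//|k].
move/memPhi=> [[i [j [h1 h2 h3 e]]]|[i [h1 e]]|[i [j [h1 h2 h3 e]]]|[j [hj e]]].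
- have H := @myeqE _ _ _ _ _ (@ent_W _ _ _ _) (@ent_E _ _ _) e.
  rewrite /fW /fE in H.
  have [k1 [ej hab]] := @famA r k.+1 a b i j ab (ltn0Sn k) ha hb h1 h2 (leq_trans h3 (leq_subr 1 r)) H.
  rewrite k1 /adjPhi; lia.
- have H := @myeqE _ _ _ _ _ (@ent_W _ _ _ _) (@ent_S _ _ _ _ _) e.
  rewrite /fW /fS /fE in H.
  have [k1 [ei hab]] := @famB r k.+1 a b r3 ab (ltn0Sn k) ha hb i h1 H.
  rewrite k1 /adjPhi; lia.
- have H := @myeqE _ _ _ _ _ (@ent_W _ _ _ _) (@ent_S _ _ _ _ _) e.
  rewrite /fW /fS /fE in H.
  by case: (@famC r k.+1 a b r3 ab (ltn0Sn k) ha hb i j ltac:(lia) h3 H).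
- have H := @myeqE _ _ _ _ _ (@ent_W _ _ _ _) (@ent_S _ _ _ _ _) e.
  rewrite /fW /fS /fE in H.
  have [k1 [ej hab]] := @famD r k.+1 a b r3 ab (ltn0Sn k) ha hb j (hZ j hj) H.
  rewrite ej in hj.
  rewrite k1 /adjPhi hj; lia.
Qed.

Lemma PsiS1 r Y k a b : (3 <= r)%N -> (forall j, j \in Y -> (1 <= j <= r - 1)%N) ->
  a != b -> (1 <= a <= r)%N -> (1 <= b <= r)%N ->
  string_in (Psi r Y) k a b -> (k <= mPsi r Y a b)%N.
Proof.
move=> r3 hY /eqP ab ha hb; case: k => [//|k].
move/memPsi=> [[i [j [h1 h2 h3 e]]]|[i [j [h1 h2 h3 e]]]|[j [hj e]]].
- have H := @myeqE _ _ _ _ _ (@ent_W _ _ _ _) (@ent_E _ _ _) e.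
  rewrite /fW /fE in H.
  have [k1 [ej hab]] := @famA r k.+1 a b i j ab (ltn0Sn k) ha hb h1 h2 h3 H.
  rewrite k1 /mPsi; case: ifP => _; lia.
- have H := @myeqE _ _ _ _ _ (@ent_W _ _ _ _) (@ent_S _ _ _ _ _) e.
  rewrite /fW /fS /fE in H.
  by case: (@famB' r k.+1 a b r3 ab (ltn0Sn k) ha hb i j ltac:(lia) h3 H).
- have H := @myeqE _ _ _ _ _ (@ent_W _ _ _ _) (@ent_S _ _ _ _ _) e.
  rewrite /fW /fS /fE in H.
  have [k2 [ej [ea eb]]] := @famC' r k.+1 a b r3 ab (ltn0Sn k) ha hb j (hY j hj) H.
  rewrite ej in hj.
  by rewrite k2 /mPsi ea eb hj !eqxx.
Qed.

Lemma inPhiA r Z i j : (1 <= i)%N -> (i < j <= r)%N -> eta r i j.-1 \in Phi r Z.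
Proof.
move=> h1 h2; rewrite mem_cat; apply/orP; left; apply/allpairsPdep.
exists i, j; split => //; rewrite mem_iota; lia.
Qed.

Lemma inPhiB r Z i : (1 <= i <= r - 1)%N -> eta r i (r-2) + alpha r r \in Phi r Z.
Proof.
move=> h1; rewrite !mem_cat; apply/orP; right; apply/orP; left; apply/mapP.
exists i => //; rewrite mem_iota; lia.
Qed.

Lemma inPhiD r Z j : j \in Z -> eta r j r + eta r j (r-2) \in Phi r Z.
Proof.
move=> h1; rewrite !mem_cat; apply/orP; right; apply/orP; right; apply/orP; right.
by apply/mapP; exists j.
Qed.

Lemma inPsiA r Y i j : (1 <= i)%N -> (i <= j <= r)%N -> eta r i j \in Psi r Y.
Proof.
move=> h1 h2; rewrite mem_cat; apply/orP; left; apply/allpairsPdep.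
exists i, j; split => //; rewrite mem_iota; lia.
Qed.

Lemma inPsiC r Y j : j \in Y -> eta r j r + eta r j (r-1) \in Psi r Y.
Proof.
move=> h1; rewrite !mem_cat; apply/orP; right; apply/orP; right.
by apply/mapP; exists j.
Qed.

Lemma PhiS2 r Z a b : (3 <= r)%N -> a != b -> (1 <= a <= r)%N -> (1 <= b <= r)%N ->
  adjPhi r Z a b -> string_in (Phi r Z) 1 a b.
Proof.
move=> r3 /eqP ab ha hb; rewrite /adjPhi /string_in.
case/orP => [h|/orP[h|/orP[h|/orP[h|/andP[hz h]]]]].
- rewrite (_ : _ + _ = eta r a (a.+2).-1); first by apply: inPhiA; lia.
  apply: (@Eeq _ _ _ _ _ (@ent_W _ _ _ _) (@ent_E _ _ _)) => t ht; rewrite /fW /fE; lia.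
- rewrite (_ : _ + _ = eta r b (b.+2).-1); first by apply: inPhiA; lia.
  apply: (@Eeq _ _ _ _ _ (@ent_W _ _ _ _) (@ent_E _ _ _)) => t ht; rewrite /fW /fE; lia.
- rewrite (_ : _ + _ = eta r (r-2) (r-2) + alpha r r); first by apply: inPhiB; lia.
  apply: (@Eeq _ _ _ _ _ (@ent_W _ _ _ _) (@ent_S _ _ _ _ _)) => t ht; rewrite /fW /fS /fE; lia.
- rewrite (_ : _ + _ = eta r (r-2) (r-2) + alpha r r); first by apply: inPhiB; lia.
  apply: (@Eeq _ _ _ _ _ (@ent_W _ _ _ _) (@ent_S _ _ _ _ _)) => t ht; rewrite /fW /fS /fE; lia.
- rewrite (_ : _ + _ = eta r (r-1) r + eta r (r-1) (r-2)); first by apply: inPhiD.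
  apply: (@Eeq _ _ _ _ _ (@ent_W _ _ _ _) (@ent_S _ _ _ _ _)) => t ht; rewrite /fW /fS /fE; lia.
Qed.

Lemma PsiS2 r Y a b : (3 <= r)%N -> a != b -> (1 <= a <= r)%N -> (1 <= b <= r)%N ->
  (0 < mPsi r Y a b)%N -> string_in (Psi r Y) (mPsi r Y a b) a b.
Proof.
move=> r3 /eqP ab ha hb; rewrite /mPsi /string_in.
case: ifP => [/and3P[/eqP ea /eqP eb hy] _|_ h].
  rewrite (_ : _ + _ = eta r (r-1) r + eta r (r-1) (r-1)); first by apply: inPsiC.
  apply: (@Eeq _ _ _ _ _ (@ent_W _ _ _ _) (@ent_S _ _ _ _ _)) => t ht; rewrite /fW /fS /fE; lia.
have [e1|e2] : (b = a.+1 \/ a = b.+1)%N by lia.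
  rewrite (_ : _ + _ = eta r a b); first by apply: inPsiA; lia.
  apply: (@Eeq _ _ _ _ _ (@ent_W _ _ _ _) (@ent_E _ _ _)) => t ht; rewrite /fW /fE; lia.
rewrite (_ : _ + _ = eta r b a); first by apply: inPsiA; lia.
apply: (@Eeq _ _ _ _ _ (@ent_W _ _ _ _) (@ent_E _ _ _)) => t ht; rewrite /fW /fE; lia.
Qed.


Lemma cartanPhi r Z (p q : 'I_r) : (3 <= r)%N -> (forall j, j \in Z -> (1 <= j <= r - 1)%N) ->
  p != q -> cartan (Phi r Z) p q = - (adjPhi r Z p.+1 q.+1 : nat)%:Z.
Proof.
move=> r3 hZ npq; rewrite mxE (negbTE npq).
have hp := ltn_ord p; have hq := ltn_ord q.
have ab : p.+1 != q.+1 by rewrite eqSS.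
rewrite (@max_eq _ (fun n => string_in (Phi r Z) n p.+1 q.+1) (adjPhi r Z p.+1 q.+1)) //.
- apply: leq_trans (@kbound_gt _ _ r3 _); first by case: adjPhi.
  by apply: (inPhiA r Z 1 3) => //; rewrite /= r3.
- case h: adjPhi => // _; apply: PhiS2 => //; lia.
- move=> k; apply: PhiS1 => //; lia.
Qed.

Lemma cartanPsi r Y (p q : 'I_r) : (3 <= r)%N -> (forall j, j \in Y -> (1 <= j <= r - 1)%N) ->
  p != q -> cartan (Psi r Y) p q = - (mPsi r Y p.+1 q.+1 : nat)%:Z.
Proof.
move=> r3 hY npq; rewrite mxE (negbTE npq).
have hp := ltn_ord p; have hq := ltn_ord q.
have ab : p.+1 != q.+1 by rewrite eqSS.
rewrite (@max_eq _ (fun n => string_in (Psi r Y) n p.+1 q.+1) (mPsi r Y p.+1 q.+1)) //.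
- apply: leq_trans (@kbound_gt _ _ r3 _); first by rewrite /mPsi; case: ifP => _ //; case: orP.
  by apply: (inPsiA r Y 1 2) => //; rewrite /= (leq_trans _ r3).
- move=> h; apply: PsiS2 => //; lia.
- move=> k; apply: PsiS1 => //; lia.
Qed.

Lemma diagC r L (p : 'I_r) : cartan L p p = 2.
Proof. by rewrite mxE eqxx. Qed.



Ltac splitH := repeat match goal with
  | H : is_true (_ || _) |- _ => case/orP: H => H
  | H : is_true (_ && _) |- _ => let H1 := fresh "H" in case/andP: H => H1 H
  end.

Lemma eqD' r (Z : seq nat) (x y : nat) : (3 <= r)%N -> (0 < x <= r)%N -> (0 < y <= r)%N -> x != y -> (r-1)%N \in Z ->
  adjPhi r Z x y = (((y == x.+1) && (1 <= x <= r - 3)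
                             || ((x == r - 2) && (y == r - 1))
                             || ((x == r - 2) && (y == r))
                             || ((x == r - 1) && (y == r)))
      || ((x == y.+1) && (1 <= y <= r - 3)
                             || ((y == r - 2) && (x == r - 1))
                             || ((y == r - 2) && (x == r))
                             || ((y == r - 1) && (x == r))))%N.
Proof. move=> r3 hx hy xy hz; rewrite /adjPhi hz /=.
apply/idP/idP => H; splitH; lia. Qed.

Lemma eqD r (Z : seq nat) (x y : nat) : (3 <= r)%N -> (0 < x <= r)%N -> (0 < y <= r)%N -> x != y -> (r-1)%N \notin Z ->
  adjPhi r Z x y = (((y == x.+1) && (1 <= x <= r - 2)
                             || ((x == r - 2) && (y == r)))
      || ((x == y.+1) && (1 <= y <= r - 2)
                             || ((y == r - 2) && (x == r))))%N.
Proof. move=> r3 hx hy xy hz; rewrite /adjPhi (negbTE hz) /= orbF.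
apply/idP/idP => H; splitH; lia. Qed.

Theorem proposition3p11 (r : nat) (Y Z : seq nat) :
  (3 <= r)%N ->
  (forall j, j \in Y -> (1 <= j <= r - 1)%N) ->
  (forall j, j \in Z -> (1 <= j <= r - 1)%N) ->
  (((r - 1)%N \in Z -> cartan (Phi r Z) = cartan_D' r) /\
   ((r - 1)%N \notin Z -> of_type (cartan (Phi r Z)) (cartan_D r))) /\
  (((r - 1)%N \in Y -> of_type (cartan (Psi r Y)) (cartan_C r)) /\
   ((r - 1)%N \notin Y -> of_type (cartan (Psi r Y)) (cartan_A r))).
Proof.
move=> r3 hY hZ; split; split.
- move=> hz; apply/matrixP => p q.
  have hp := ltn_ord p; have hq := ltn_ord q.
  have [<-|npq] := eqVneq p q; first by rewrite diagC !mxE eqxx.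
  have xy : p.+1 != q.+1 by rewrite eqSS.
  rewrite cartanPhi // !mxE (negbTE npq) eqD' //.
  by case: (_ || _).
- move=> hz; exists 1%g => p q; rewrite !perm1.
  have hp := ltn_ord p; have hq := ltn_ord q.
  have [<-|npq] := eqVneq p q; first by rewrite diagC !mxE eqxx.
  have xy : p.+1 != q.+1 by rewrite eqSS.
  rewrite cartanPhi // !mxE (negbTE npq) eqD //.
  by case: (_ || _).
- move=> hy; exists 1%g => p q; rewrite !perm1.
  have hp := ltn_ord p; have hq := ltn_ord q.
  have [<-|npq] := eqVneq p q.
    rewrite diagC !mxE eqxx; case: ifP => // /andP[/eqP h1 /eqP h2]; lia.
  rewrite cartanPsi // !mxE (negbTE npq) /mPsi hy andbT -subn1.
  by case: ifP => _ //; case: (_ || _).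
- move=> hy; exists 1%g => p q; rewrite !perm1.
  have hp := ltn_ord p; have hq := ltn_ord q.
  have [<-|npq] := eqVneq p q; first by rewrite diagC !mxE eqxx.
  rewrite cartanPsi // !mxE (negbTE npq) /mPsi (negbTE hy) !andbF.
  by case: (_ || _).
Qed.
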